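(* For every composition $I=(i_1,\dots,i_j)$ (positive integers, $j\ge1$): (a) $\eta_{1,1}(M_I)=\zeta(i_j+1,i_{j-1},\dots,i_1)$; (b) $\eta_{0,1,1}(M_I)=1$ if $I=(1)$; $\eta_{0,1,1}(M_I)=\eta_{0,1,1}(M_{(i_1,\dots,i_{j-1})})$ if $i_j=1$ and $j\ge2$; and $\eta_{0,1,1}(M_I)=\zeta(i_j,i_{j-1},\dots,i_1)-\eta_{0,1,1}(M_{(i_1,\dots,i_{j-1},i_j-1)})$ if $i_j\ge2$.
   Context: For a composition $I=(i_1,\dots,i_j)$ and $n\ge1$, let $M_I(n)=\sum_{1\le n_1<n_2<\cdots<n_j\le n}n_1^{-i_1}\cdots n_j^{-i_j}$ (this is the monomial quasi-symmetric function $M_I$ evaluated at $x_r=1/r$ for $r\le n$ and $x_r=0$ for $r>n$). For nonnegative integers $s_1,\dots,s_k$ with $s_1+\dots+s_k\ge2$, $\eta_{s_1,\dots,s_k}(M_I)=\sum_{n=1}^\infty\frac{M_I(n)}{n^{s_1}(n+1)^{s_2}\cdots(n+k-1)^{s_k}}$, extended linearly to quasi-symmetric functions. Multiple zeta values: for positive integers $a_1,\dots,a_k$ with $a_1\ge2$, $\zeta(a_1,\dots,a_k)=\sum_{n_1>\cdots>n_k\ge1}n_1^{-a_1}\cdots n_k^{-a_k}$. *)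

(* Defs.v *)
From Stdlib Require Import Reals List.
Import ListNotations.
Open Scope R_scope.

Fixpoint sumR (f : nat -> R) (k : nat) : R :=
  match k with
  | O => 0
  | S k' => sumR f k' + f k'
  end.

(* Mr I a n = sum over a < n_1 < ... < n_j <= n of n_1^{-i_1} ... n_j^{-i_j},
   for I = [i_1; ...; i_j]  (empty product/sum convention: Mr [] a n = 1). *)
Fixpoint Mr (I : list nat) (a n : nat) : R :=
  match I with
  | [] => 1
  | i :: I' => sumR (fun t => let m := (a + 1 + t)%nat in
                               / (INR m ^ i) * Mr I' m n) (n - a)
  end.

(* M_I(n): monomial quasi-symmetric function at x_r = 1/r (r <= n), 0 otherwise. *)
Definition M (I : list nat) (n : nat) : R := Mr I 0 n.

Fixpoint denom (s : list nat) (n : nat) : R :=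
  match s with
  | [] => 1
  | a :: s' => INR n ^ a * denom s' (S n)
  end.

(* term of the series eta_{s}(M_I), indexed so that index m corresponds to n = m+1 *)
Definition eta_term (s : list nat) (I : list nat) (m : nat) : R :=
  M I (S m) / denom s (S m).

(* Truncated multiple zeta sum:
   mzv_partial [a_1;...;a_k] N = sum_{N >= n_1 > ... > n_k >= 1} n_1^{-a_1} ... n_k^{-a_k}.
   zeta(a_1,...,a_k) is its limit as N -> infinity. *)
Fixpoint mzv_partial (a : list nat) (N : nat) : R :=
  match a with
  | [] => 1
  | a1 :: a' => sumR (fun t => let n := S t in / (INR n ^ a1) * mzv_partial a' t) N
  end.

Definition composition (I : list nat) : Prop := I <> [] /\ Forall (fun i => (0 < i)%nat) I.

(* Main.v *)
Require Import Defs.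
From Stdlib Require Import Reals List Lra Lia Psatz.
Import ListNotations.
Open Scope R_scope.

Lemma sumR_ext f g k : (forall t, (t < k)%nat -> f t = g t) -> sumR f k = sumR g k.
Proof. induction k; intros H; simpl; auto. rewrite IHk by (intros; apply H; lia). rewrite H by lia. reflexivity. Qed.
Lemma sumR_plus f g k : sumR (fun t => f t + g t) k = sumR f k + sumR g k.
Proof. induction k; simpl; [ring|rewrite IHk; ring]. Qed.
Lemma sumR_minus f g k : sumR (fun t => f t - g t) k = sumR f k - sumR g k.
Proof. induction k; simpl; [ring|rewrite IHk; ring]. Qed.
Lemma sumR_scal c f k : sumR (fun t => c * f t) k = c * sumR f k.
Proof. induction k; simpl; [ring|rewrite IHk; ring]. Qed.
Lemma sumR_le f g k : (forall t, (t < k)%nat -> f t <= g t) -> sumR f k <= sumR g k.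
Proof. induction k; intros H; simpl. lra. assert (f k <= g k) by (apply H; lia).
  assert (sumR f k <= sumR g k) by (apply IHk; intros; apply H; lia). lra. Qed.
Lemma sumR_nonneg f k : (forall t, 0 <= f t) -> 0 <= sumR f k.
Proof. intros H. induction k; simpl. lra. specialize (H k). lra. Qed.
Lemma sumR_mono f k p : (forall t, 0 <= f t) -> sumR f k <= sumR f (k + p).
Proof. intros H. induction p. rewrite Nat.add_0_r; lra.
  rewrite Nat.add_succ_r. simpl. specialize (H (k+p)%nat). lra. Qed.
Lemma sumR_shift f k : sumR f (S k) = f 0%nat + sumR (fun t => f (S t)) k.
Proof. induction k. simpl; ring. change (sumR f (S (S k))) with (sumR f (S k) + f (S k)).
  rewrite IHk. simpl. ring. Qed.

Lemma INRS_pos n : 0 < INR (S n).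
Proof. apply lt_0_INR; lia. Qed.

Lemma inv_pow_pos n i : 0 < / INR (S n) ^ i.
Proof. apply Rinv_0_lt_compat, pow_lt, INRS_pos. Qed.

Lemma Mr_nonneg I : forall a n, 0 <= Mr I a n.
Proof. induction I as [|j I IH]; intros a n; simpl. lra.
  apply sumR_nonneg. intros t. apply Rmult_le_pos; [|apply IH].
  replace (a + 1 + t)%nat with (S (a + t)) by lia. left; apply inv_pow_pos. Qed.

Lemma Mr_diag I a : I <> [] -> Mr I a a = 0.
Proof. destruct I; [congruence|]. intros _. simpl. rewrite Nat.sub_diag. reflexivity. Qed.

Lemma Mr_step I : forall i a n, (a <= n)%nat ->
  Mr (I ++ [i]) a (S n) = Mr (I ++ [i]) a n + / INR (S n) ^ i * Mr I a n.
Proof. induction I as [|j I IH]; intros i a n Ha.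
- cbn [Mr app]. replace (S n - a)%nat with (S (n - a)) by lia. cbn [sumR].
  replace (a + 1 + (n - a))%nat with (S n) by lia. reflexivity.
- change ((j :: I) ++ [i]) with (j :: (I ++ [i])).
  cbn [Mr]. replace (S n - a)%nat with (S (n - a)) by lia. cbn [sumR].
  replace (a + 1 + (n - a))%nat with (S n) by lia.
  rewrite Mr_diag by (destruct I; discriminate). rewrite Rmult_0_r, Rplus_0_r.
  rewrite (sumR_ext _ (fun t => / INR (a + 1 + t) ^ j * Mr (I ++ [i]) (a + 1 + t) n
     + / INR (S n) ^ i * (/ INR (a + 1 + t) ^ j * Mr I (a + 1 + t) n))).
  + rewrite sumR_plus, sumR_scal. reflexivity.
  + intros t Ht. cbv zeta. rewrite IH by lia. ring.
Qed.

Lemma M_step I i n : M (I ++ [i]) (S n) = M (I ++ [i]) n + / INR (S n) ^ i * M I n.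
Proof. unfold M. apply Mr_step. lia. Qed.
Lemma M_zero I i : M (I ++ [i]) 0 = 0.
Proof. unfold M. apply Mr_diag. destruct I; discriminate. Qed.
Lemma M_nonneg I n : 0 <= M I n.
Proof. apply Mr_nonneg. Qed.
Lemma M_sum I i N : M (I ++ [i]) N = sumR (fun t => / INR (S t) ^ i * M I t) N.
Proof. induction N. apply M_zero. rewrite M_step, IHN. reflexivity. Qed.
Lemma M_mono I n : M I n <= M I (S n).
Proof. destruct I as [|x I]. unfold M; simpl; lra.
  destruct (exists_last (l:=x::I) ltac:(discriminate)) as [I0 [i E]]. rewrite E, M_step.
  pose proof (inv_pow_pos n i). pose proof (M_nonneg I0 n). nra. Qed.
Lemma mzv_M I N : mzv_partial (rev I) N = M I N.
Proof. revert N. induction I as [|i I IH] using rev_ind; intros N.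
  reflexivity. rewrite rev_app_distr. simpl. rewrite M_sum. apply sumR_ext. intros; rewrite IH; reflexivity. Qed.

Lemma div_lt a b c : 0 < c -> a < b * c -> a / c < b.
Proof. intros Hc H. unfold Rdiv. apply Rmult_lt_reg_r with c; auto.
  rewrite Rmult_assoc, Rinv_l by lra. lra. Qed.

Lemma S_INR' n : INR (S (S n)) = INR (S n) + 1.
Proof. apply S_INR. Qed.

Definition e11 I t := M I (S t) / (INR (S t) * INR (S (S t))).
Definition e011 I t := M I (S t) / (INR (S (S t)) * INR (S (S (S t)))).
Definition Q I0 i N := sumR (fun t => / INR (S t) ^ i * M I0 t / INR (S (S t))) N.

Lemma eta11_eq I t : eta_term [1%nat; 1%nat] I t = e11 I t.
Proof. unfold eta_term, e11. cbn [denom]. rewrite !pow_1, !Rmult_1_r. reflexivity. Qed.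
Lemma eta011_eq I t : eta_term [0%nat; 1%nat; 1%nat] I t = e011 I t.
Proof. unfold eta_term, e011. cbn [denom]. rewrite !pow_1, pow_O, !Rmult_1_r, Rmult_1_l. reflexivity. Qed.

Lemma SBP1 f d : (forall t, f (S t) = f t + d t) -> f 0%nat = 0 -> forall N,
  sumR (fun t => f (S t) / (INR (S t) * INR (S (S t)))) N + f N / INR (S N)
  = sumR (fun t => d t / INR (S t)) N.
Proof. intros Hf H0 N. induction N. simpl. rewrite H0. unfold Rdiv; ring.
  cbn [sumR]. rewrite <- IHN, Hf. rewrite (S_INR' N). pose proof (INRS_pos N).
  field. lra. Qed.

Lemma SBP2 f d : (forall t, f (S t) = f t + d t) -> f 0%nat = 0 -> forall N,
  sumR (fun t => f (S t) / (INR (S (S t)) * INR (S (S (S t))))) N + f N / INR (S (S N))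
  = sumR (fun t => d t / INR (S (S t))) N.
Proof. intros Hf H0 N. induction N. simpl. rewrite H0. unfold Rdiv; ring.
  cbn [sumR]. rewrite <- IHN, Hf. rewrite (S_INR' (S N)). pose proof (INRS_pos (S N)).
  field. lra. Qed.

Lemma tel N : sumR (fun t => / (INR (S t) * INR (S (S t)))) N = 1 - / INR (S N).
Proof. induction N. simpl. field. cbn [sumR]. rewrite IHN. rewrite (S_INR' N).
  pose proof (INRS_pos N). field. lra. Qed.

Lemma inv_bound x e : 1 <= x -> (2 <= e)%nat -> / x ^ e <= 2 / (x * (x + 1)).
Proof. intros Hx He.
  assert (/ x ^ e <= / x ^ 2).
  { apply Rinv_le_contravar. apply pow_lt; lra. apply Rle_pow; auto. }
  replace (2 / (x * (x + 1))) with (/ x ^ 2 + (x - 1) / (x ^ 2 * (x + 1))) by (field; lra).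
  assert (0 <= (x - 1) / (x ^ 2 * (x + 1))).
  { apply Rmult_le_pos; [lra|]. left; apply Rinv_0_lt_compat. nra. }
  lra. Qed.

Lemma Wle I0 e N : (2 <= e)%nat ->
  sumR (fun t => / INR (S t) ^ e * M I0 t) N <= 2 * sumR (e11 I0) N.
Proof. intros He. rewrite <- sumR_scal. apply sumR_le. intros t _. unfold e11.
  rewrite (S_INR' t). pose proof (INRS_pos t). set (x := INR (S t)).
  assert (1 <= x). { unfold x. rewrite S_INR. pose proof (pos_INR t). lra. }
  pose proof (inv_bound x e H0 He). pose proof (M_mono I0 t). pose proof (M_nonneg I0 t).
  assert (0 <= / x ^ e) by (left; apply Rinv_0_lt_compat, pow_lt; lra).
  apply Rle_trans with (2 / (x * (x + 1)) * M I0 t). apply Rmult_le_compat_r; auto.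
  replace (2 * (M I0 (S t) / (x * (x + 1)))) with (2 / (x * (x + 1)) * M I0 (S t)) by (field; lra).
  apply Rmult_le_compat_l; auto. left. apply Rmult_lt_0_compat; [lra|]. apply Rinv_0_lt_compat; nra.
Qed.

Lemma d_rew I0 i t : / INR (S t) ^ i * M I0 t / INR (S t) = / INR (S t) ^ (S i) * M I0 t.
Proof. pose proof (INRS_pos t). set (x := INR (S t)). change (x ^ S i) with (x * x ^ i).
  field. split; [apply pow_nonzero|]; unfold x; lra. Qed.

Lemma e11_bound I : Forall (fun i => (0 < i)%nat) I -> forall N, sumR (e11 I) N <= 2 ^ length I.
Proof. induction I as [|i I0 IH] using rev_ind; intros HF N.
- simpl. unfold e11, M. simpl Mr. rewrite (sumR_ext _ (fun t => / (INR (S t) * INR (S (S t))))).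
  rewrite tel. pose proof (INRS_pos N). pose proof (Rinv_0_lt_compat _ H). lra.
  intros; unfold Rdiv; ring.
- apply Forall_app in HF as [HF0 HFi]. inversion HFi; subst.
  pose proof (SBP1 (M (I0 ++ [i])) (fun t => / INR (S t) ^ i * M I0 t)
     (fun t => M_step I0 i t) (M_zero I0 i) N).
  cbv beta in H.
  assert (Hr : sumR (fun t => / INR (S t) ^ i * M I0 t / INR (S t)) N = sumR (fun t => / INR (S t) ^ (S i) * M I0 t) N) by (apply sumR_ext; intros; apply d_rew).
  rewrite Hr in H.
  pose proof (Wle I0 (S i) N ltac:(lia)). pose proof (IH HF0 N).
  assert (0 <= M (I0 ++ [i]) N / INR (S N)).
  { apply Rmult_le_pos. apply M_nonneg. left; apply Rinv_0_lt_compat, INRS_pos. }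
  rewrite length_app. simpl length. rewrite Nat.add_1_r. simpl pow.
  unfold e11. lra.
Qed.

Lemma sum_f_R0_sumR f n : sum_f_R0 f n = sumR f (S n).
Proof. induction n; simpl. ring. rewrite IHn. reflexivity. Qed.

Lemma inf_sum_of f L : Un_cv (sumR f) L -> infinite_sum f L.
Proof. intros H eps Heps. destruct (H eps Heps) as [N HN]. exists N. intros n Hn.
  rewrite sum_f_R0_sumR. apply HN. lia. Qed.

Lemma Un_cv_ext u v l : (forall n, u n = v n) -> Un_cv u l -> Un_cv v l.
Proof. intros E H eps Heps. destruct (H eps Heps) as [N HN]. exists N. intros; rewrite <- E; auto. Qed.

Lemma Un_cv_shift u l : Un_cv u l -> Un_cv (fun n => u (S n)) l.
Proof. intros H eps Heps. destruct (H eps Heps) as [N HN]. exists N. intros; apply HN; lia. Qed.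

Lemma squeeze u v : Un_cv u 0 -> (forall n, 0 <= v n <= u n) -> Un_cv v 0.
Proof. intros H Hv eps Heps. destruct (H eps Heps) as [N HN]. exists N. intros n Hn.
  specialize (HN n Hn). specialize (Hv n). unfold Rdist in *. rewrite Rminus_0_r in *.
  rewrite Rabs_pos_eq in * by lra. lra. Qed.

Lemma inv_cv : Un_cv (fun N => / INR (S N)) 0.
Proof. intros eps Heps. destruct (INR_archimed eps 1 Heps) as [n Hn]. exists n.
  intros N HN. unfold Rdist. rewrite Rminus_0_r. pose proof (INRS_pos N).
  rewrite Rabs_pos_eq by (left; apply Rinv_0_lt_compat; auto).
  replace (/ INR (S N)) with (1 / INR (S N)) by (unfold Rdiv; ring). apply div_lt; auto.
  assert (INR n <= INR (S N)) by (apply le_INR; lia). nra. Qed.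

Lemma cv_sum_growing f B : (forall t, 0 <= f t) -> (forall N, sumR f N <= B) ->
  exists L, Un_cv (sumR f) L.
Proof. intros Hf HB. destruct (growing_cv (sumR f)) as [L HL].
  intros n; simpl; specialize (Hf n); lra.
  exists B. intros x [n ->]. auto. exists L; auto. Qed.

Lemma vanish I0 i : Forall (fun i => (0 < i)%nat) I0 -> (1 <= i)%nat ->
  Un_cv (fun N => M (I0 ++ [i]) N / INR (S N)) 0.
Proof. intros HF Hi.
  set (W := sumR (fun t => / INR (S t) ^ i * M I0 t / INR (S t))).
  assert (Wnn : forall t, 0 <= / INR (S t) ^ i * M I0 t / INR (S t)).
  { intros t. rewrite d_rew. apply Rmult_le_pos; [left; apply inv_pow_pos| apply M_nonneg]. }
  assert (HWb : forall N, W N <= 2 * 2 ^ length I0).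
  { intros N. unfold W. rewrite (sumR_ext _ (fun t => / INR (S t) ^ (S i) * M I0 t)) by (intros; apply d_rew).
    pose proof (Wle I0 (S i) N ltac:(lia)). pose proof (e11_bound I0 HF N). lra. }
  destruct (growing_cv W) as [w Hw].
  { intros n. unfold W; cbn [sumR]. specialize (Wnn n). lra. }
  { exists (2 * 2 ^ length I0). intros x [n ->]. auto. }
  assert (Wg : Un_growing W) by (intros n; unfold W; cbn [sumR]; specialize (Wnn n); lra).
  assert (Kr : forall K p, M (I0 ++ [i]) (K + p) <= M (I0 ++ [i]) K + INR (S (K + p)) * (W (K + p)%nat - W K)).
  { intros K p. induction p.
    - rewrite Nat.add_0_r. lra.
    - rewrite Nat.add_succ_r. set (n := (K + p)%nat) in *. rewrite M_step.
      assert (WS : W (S n) = W n + / INR (S n) ^ i * M I0 n / INR (S n)) by reflexivity.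
      rewrite WS, (S_INR' n).
      assert (X0 : 0 <= W n - W K) by (unfold n, W; pose proof (sumR_mono (fun t => / INR (S t) ^ i * M I0 t / INR (S t)) K p Wnn); lra).
      pose proof (INRS_pos n). set (x := INR (S n)) in *.
      set (D := / x ^ i * M I0 n). assert (D0 : 0 <= D).
      { unfold D. apply Rmult_le_pos; [left; apply Rinv_0_lt_compat, pow_lt; auto|apply M_nonneg]. }
      assert (Dx : D / x * x = D) by (field; lra).
      assert (q0 : 0 <= D / x) by (apply Rmult_le_pos; [auto|left; apply Rinv_0_lt_compat; auto]).
      unfold D in *. set (q := / x ^ i * M I0 n / x) in *. nra. }
  intros eps Heps. destruct (Hw (eps / 2) ltac:(lra)) as [K HK].
  specialize (HK K (le_n K)). pose proof (growing_ineq W w Wg Hw K) as HKw.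
  unfold Rdist in HK. rewrite Rabs_left1 in HK by lra.
  destruct (INR_archimed (eps / 2) (M (I0 ++ [i]) K) ltac:(lra)) as [n0 Hn0].
  exists (K + n0)%nat. intros N HN. replace N with (K + (N - K))%nat by lia.
  set (p := (N - K)%nat). specialize (Kr K p). pose proof (growing_ineq W w Wg Hw (K + p)).
  pose proof (INRS_pos (K + p)). set (x := INR (S (K + p))) in *.
  assert (INR n0 <= x) by (unfold x; apply le_INR; lia).
  pose proof (M_nonneg (I0 ++ [i]) (K + p)). pose proof (M_nonneg (I0 ++ [i]) K).
  unfold Rdist. rewrite Rminus_0_r. rewrite Rabs_pos_eq.
  2:{ apply Rmult_le_pos; auto. left; apply Rinv_0_lt_compat; auto. }
  apply div_lt; auto. nra.
Qed.

Lemma partA I0 i : Forall (fun i => (0 < i)%nat) I0 -> (1 <= i)%nat ->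
  exists L, Un_cv (sumR (e11 (I0 ++ [i]))) L /\
            Un_cv (fun N => sumR (fun t => / INR (S t) ^ (S i) * M I0 t) N) L.
Proof. intros HF Hi.
  assert (HF' : Forall (fun i => (0 < i)%nat) (I0 ++ [i])) by (apply Forall_app; split; auto).
  destruct (cv_sum_growing (e11 (I0 ++ [i])) _ ltac:(intros; unfold e11; apply Rmult_le_pos; [apply M_nonneg|left; apply Rinv_0_lt_compat; apply Rmult_lt_0_compat; apply INRS_pos]) (e11_bound _ HF')) as [L HL].
  exists L. split; auto.
  pose proof (CV_plus _ _ _ _ HL (vanish I0 i HF Hi)). rewrite Rplus_0_r in H.
  eapply Un_cv_ext; [|exact H]. intros N. cbv beta.
  pose proof (SBP1 (M (I0 ++ [i])) (fun t => / INR (S t) ^ i * M I0 t)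
     (fun t => M_step I0 i t) (M_zero I0 i) N). cbv beta in H0. unfold e11. rewrite H0.
  apply sumR_ext; intros; apply d_rew.
Qed.

Lemma partB I0 i : Forall (fun i => (0 < i)%nat) I0 -> (1 <= i)%nat ->
  exists L, Un_cv (sumR (e011 (I0 ++ [i]))) L /\ Un_cv (Q I0 i) L.
Proof. intros HF Hi.
  assert (HF' : Forall (fun i => (0 < i)%nat) (I0 ++ [i])) by (apply Forall_app; split; auto).
  assert (Hle : forall t, 0 <= e011 (I0 ++ [i]) t <= e11 (I0 ++ [i]) t).
  { intros t. unfold e011, e11. rewrite !S_INR'. pose proof (INRS_pos t).
    pose proof (M_nonneg (I0 ++ [i]) (S t)).
    split. apply Rmult_le_pos; auto. left; apply Rinv_0_lt_compat; nra.
    unfold Rdiv. apply Rmult_le_compat_l; auto. apply Rinv_le_contravar; nra. }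
  destruct (cv_sum_growing (e011 (I0 ++ [i])) (2 ^ length (I0 ++ [i])) ltac:(intros t; apply Hle)) as [L HL].
  { intros N. eapply Rle_trans; [|apply (e11_bound _ HF' N)]. apply sumR_le; intros; apply Hle. }
  exists L. split; auto.
  assert (V : Un_cv (fun N => M (I0 ++ [i]) N / INR (S (S N))) 0).
  { apply squeeze with (1 := vanish I0 i HF Hi). intros n. pose proof (INRS_pos n).
    pose proof (M_nonneg (I0 ++ [i]) n). rewrite S_INR'. split.
    apply Rmult_le_pos; auto; left; apply Rinv_0_lt_compat; lra.
    unfold Rdiv. apply Rmult_le_compat_l; auto. apply Rinv_le_contravar; lra. }
  pose proof (CV_plus _ _ _ _ HL V). rewrite Rplus_0_r in H.
  eapply Un_cv_ext; [|exact H]. intros N. cbv beta.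
  pose proof (SBP2 (M (I0 ++ [i])) (fun t => / INR (S t) ^ i * M I0 t)
     (fun t => M_step I0 i t) (M_zero I0 i) N). cbv beta in H0. unfold e011. rewrite H0.
  reflexivity.
Qed.

Theorem mainTheorem9 (I : list nat) (HI : composition I) :
  (exists L : R,
      infinite_sum (eta_term [1%nat; 1%nat] I) L /\
      Un_cv (mzv_partial (S (last I 0%nat) :: rev (removelast I))) L) /\
  (I = [1%nat] -> infinite_sum (eta_term [0%nat; 1%nat; 1%nat] I) 1) /\
  (last I 0%nat = 1%nat -> (2 <= length I)%nat ->
     exists L : R,
       infinite_sum (eta_term [0%nat; 1%nat; 1%nat] I) L /\
       infinite_sum (eta_term [0%nat; 1%nat; 1%nat] (removelast I)) L) /\
  ((2 <= last I 0%nat)%nat ->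
     exists L Z L' : R,
       infinite_sum (eta_term [0%nat; 1%nat; 1%nat] I) L /\
       Un_cv (mzv_partial (rev I)) Z /\
       infinite_sum (eta_term [0%nat; 1%nat; 1%nat]
                       (removelast I ++ [(last I 0%nat - 1)%nat])) L' /\
       L = Z - L').
Proof.
  destruct HI as [Hne Hpos]. destruct (exists_last Hne) as [I0 [i E]]. subst I.
  rewrite last_last, removelast_last.
  apply Forall_app in Hpos as [HF Hi]. inversion Hi as [|? ? Hi1]; subst.
  assert (inf011 : forall J L, Un_cv (sumR (e011 J)) L -> infinite_sum (eta_term [0%nat; 1%nat; 1%nat] J) L).
  { intros J L HJ. apply inf_sum_of. eapply Un_cv_ext; [|exact HJ]. intros N; apply sumR_ext; intros; rewrite eta011_eq; reflexivity. }
  split; [|split; [|split]].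
  - destruct (partA I0 i HF Hi1) as [L [H1 H2]]. exists L. split.
    + apply inf_sum_of. eapply Un_cv_ext; [|exact H1]. intros N; apply sumR_ext; intros; rewrite eta11_eq; reflexivity.
    + eapply Un_cv_ext; [|exact H2]. intros N. cbn [mzv_partial]. apply sumR_ext; intros.
      cbv zeta. rewrite mzv_M. reflexivity.
  - intros Heq. destruct I0 as [|x I0]; [|destruct I0; discriminate].
    simpl in Heq. injection Heq as ->.
    destruct (partB [] 1 HF (le_n 1)) as [L [H1 H2]].
    assert (L = 1).
    { apply (UL_sequence (Q [] 1)); auto.
      assert (HC : Un_cv (fun N => 1 - / INR (S N)) (1 - 0)).
      { apply CV_minus; [intros e He; exists 0%nat; intros; unfold Rdist; rewrite Rminus_diag, Rabs_R0; lra | apply inv_cv]. }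
      rewrite Rminus_0_r in HC. eapply Un_cv_ext; [|exact HC]. intros N. unfold Q.
      rewrite <- tel. apply sumR_ext; intros. unfold M; simpl Mr. rewrite pow_1. field.
      split; apply Rgt_not_eq, INRS_pos. }
    subst L. apply inf011. exact H1.
  - intros -> Hlen. destruct (partB I0 1 HF (le_n 1)) as [L [H1 H2]]. exists L. split.
    + apply inf011; auto.
    + apply inf011. apply Un_cv_shift in H2. eapply Un_cv_ext; [|exact H2]. intros N. cbv beta.
      unfold Q. rewrite sumR_shift.
      destruct I0 as [|y I1]. { simpl in Hlen. lia. }
      destruct (exists_last (l:=y::I1) ltac:(discriminate)) as [I2 [j E]]. rewrite E.
      rewrite M_zero. rewrite Rmult_0_r. unfold Rdiv at 1. rewrite Rmult_0_l, Rplus_0_l.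
      apply sumR_ext; intros t _. unfold e011. rewrite pow_1. rewrite (S_INR' t), (S_INR' (S t)).
      pose proof (INRS_pos t). field. rewrite ?S_INR'. split; lra.
  - intros Hi2. destruct i as [|i']; [lia|]. replace (S i' - 1)%nat with i' by lia.
    destruct (partB I0 (S i') HF Hi1) as [L [H1 H2]].
    destruct (partB I0 i' HF ltac:(lia)) as [L' [H1' H2']].
    set (I := I0 ++ [S i']).
    destruct (growing_cv (M I)) as [Z HZ].
    { intros n. apply M_mono. }
    { exists (2 * 2 ^ length I0). intros x [n ->]. unfold I. rewrite M_sum.
      pose proof (Wle I0 (S i') n ltac:(lia)). pose proof (e11_bound I0 HF n). lra. }
    exists L, Z, L'. split; [apply inf011; auto|]. split.
    + eapply Un_cv_ext; [|exact HZ]. intros; rewrite mzv_M; reflexivity.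
    + split; [apply inf011; auto|].
      apply (UL_sequence (Q I0 (S i'))); auto.
      pose proof (CV_minus _ _ _ _ HZ H2') as HC. eapply Un_cv_ext; [|exact HC]. intros N. cbv beta.
      unfold I, Q. rewrite M_sum, <- sumR_minus. apply sumR_ext. intros t _.
      rewrite (S_INR' t). pose proof (INRS_pos t). set (x := INR (S t)).
      change (x ^ S i') with (x * x ^ i'). field. split; [apply pow_nonzero|]; unfold x; lra.
Qed.
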